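(* Let $p$ be a prime, $S$ a finite non-abelian simple group, $G$ the universal $p'$-covering group of $S$, and $\phi\in\mathrm{IBr}(G)$. Put $\bar G:=G/(Z(G)\cap\ker\phi)$. Then there exists a finite group $A$ such that: (i) $A$ contains $\bar G$ as a normal subgroup, the conjugation action induces an isomorphism $A/C_A(\bar G)\cong\mathrm{Aut}(G)_\phi$, $C_A(\bar G)=Z(A)$, and $p\nmid|Z(A)|$; (ii) the Brauer character $\bar\phi\in\mathrm{IBr}(\bar G)$ whose inflation to $G$ is $\phi$ extends to $A$.
   Context: Universal $p'$-covering group of $S$: $Y/Z(Y)_p$, where $Y$ is the universal covering group of $S$ (perfect, $Y/Z(Y)\cong S$, $|Z(Y)|$ maximal) and $Z(Y)_p$ the Sylow $p$-subgroup of $Z(Y)$. Brauer characters are taken with respect to a splitting $p$-modular system. $\mathrm{Aut}(G)_\phi$ is the stabilizer of $\phi$ in $\mathrm{Aut}(G)$; its elements stabilize $Z(G)\cap\ker\phi$ and thus act on $\bar G$. *)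

(* Defs.v *)
From HB Require Import structures.
From mathcomp Require Import all_boot all_order all_algebra all_fingroup all_solvable all_field all_character.
Set Implicit Arguments. Unset Strict Implicit. Unset Printing Implicit Defensive.
Import GRing.Theory.
Local Open Scope group_scope.

Definition covering_group (sT yT : finGroupType) (S : {group sT}) (Y : {group yT}) : Prop :=
  Y^`(1)%g = Y /\ ((Y / 'Z(Y))%g \isog S).

Definition universal_covering_group (sT yT : finGroupType) (S : {group sT}) (Y : {group yT}) : Prop :=
  covering_group S Y /\
  forall (hT : finGroupType) (Y' : {group hT}), covering_group S Y' -> #|'Z(Y')| <= #|'Z(Y)|.

Definition universal_pprime_cover (p : nat) (sT gT : finGroupType) (S : {group sT}) (G : {group gT}) : Prop :=
  exists (yT : finGroupType) (Y P : {group yT}),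
    [/\ universal_covering_group S Y, P \in 'Syl_p('Z(Y)) & G \isog (Y / P)%g].

(* a lies in Aut(G)_phi, where phi is the Brauer character afforded by rho:
   a is an automorphism of G and the twisted representation rho o a is
   similar to rho. *)
Definition in_Aut_stab (F : fieldType) (gT : finGroupType) (G : {group gT}) (n : nat)
  (rho : mx_representation F G n) (a : {perm gT}) : Prop :=
  a \in Aut G /\
  exists2 B : 'M[F]_n, (B \in unitmx)%R & forall x, x \in G -> (rho (a x) *m B = B *m rho x)%R.

(* Main.v *)
Require Import Defs.
From HB Require Import structures.
From mathcomp Require Import all_boot all_order all_algebra all_fingroup all_solvable all_field all_character.
Set Implicit Arguments. Unset Strict Implicit. Unset Printing Implicit Defensive.
Import GRing.Theory.
Local Open Scope group_scope.

Record gdata := GData {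
  gd_T : choiceType;
  gd_s : seq gd_T;
  gd_one : gd_T;
  gd_mul : gd_T -> gd_T -> gd_T;
  gd_inv : gd_T -> gd_T;
  gd_one_in : gd_one \in gd_s;
  gd_mul_in : forall x y, x \in gd_s -> y \in gd_s -> gd_mul x y \in gd_s;
  gd_inv_in : forall x, x \in gd_s -> gd_inv x \in gd_s;
  gd_mulA : forall x y z, x \in gd_s -> y \in gd_s -> z \in gd_s ->
     gd_mul x (gd_mul y z) = gd_mul (gd_mul x y) z;
  gd_mul1 : forall x, x \in gd_s -> gd_mul gd_one x = x;
  gd_mulV : forall x, x \in gd_s -> gd_mul (gd_inv x) x = gd_one
}.

Section GCar.
Variable D : gdata.
Definition gcar := seq_sub (gd_s D).
HB.instance Definition _ := Finite.on gcar.
Definition gc_mul (x y : gcar) : gcar :=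
  SeqSub (gd_mul_in (ssvalP x) (ssvalP y)).
Definition gc_one : gcar := SeqSub (gd_one_in D).
Definition gc_inv (x : gcar) : gcar := SeqSub (gd_inv_in (ssvalP x)).
Lemma gc_mulA : associative gc_mul.
Proof. by move=> x y z; apply: val_inj; rewrite /= gd_mulA // ssvalP. Qed.
Lemma gc_mul1 : left_id gc_one gc_mul.
Proof. by move=> x; apply: val_inj; rewrite /= gd_mul1 // ssvalP. Qed.
Lemma gc_mulV : left_inverse gc_one gc_inv gc_mul.
Proof. by move=> x; apply: val_inj; rewrite /= gd_mulV // ssvalP. Qed.
HB.instance Definition _ := Finite_isGroup.Build gcar gc_mulA gc_mul1 gc_mulV.
Lemma gcM (x y : gcar) : ssval (x * y) = gd_mul (ssval x) (ssval y). Proof. by []. Qed.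
Lemma gc1 : ssval (1 : gcar) = gd_one D. Proof. by []. Qed.
Lemma gcV (x : gcar) : ssval (x^-1) = gd_inv (ssval x). Proof. by []. Qed.
End GCar.
From Stdlib Require Import Classical.
From mathcomp Require Import ring.
Local Open Scope ring_scope.

Section Main.
Variables (F : closedFieldType) (gT : finGroupType) (G : {group gT}) (n : nat)
  (rho : mx_representation F G n).
Hypothesis irr : mx_irreducible rho.

Definition PT := ({perm gT} * 'M[F]_n)%type.
Definition valid (x : PT) : bool :=
  [&& x.1 \in Aut G, \det x.2 == 1%R &
      [forall y in G, rho (x.1 y) *m x.2 == x.2 *m rho y]].

Lemma validP x : reflect [/\ x.1 \in Aut G, \det x.2 = 1%R &
   forall y, y \in G -> rho (x.1 y) *m x.2 = x.2 *m rho y] (valid x).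
Proof.
apply: (iffP and3P) => [[-> /eqP -> /forall_inP H] | [-> -> H]]; split => //.
  by move=> y Gy; apply/eqP/H.
by apply/forall_inP => y Gy; apply/eqP/H.
Qed.

Lemma valid_unit x : valid x -> x.2 \in unitmx.
Proof. by case/validP => _ d _; rewrite unitmxE d unitr1. Qed.

Lemma n_gt0 : (0 < n)%N.
Proof. by case/mx_irrP: irr. Qed.

Lemma Aut_mem a y : a \in Aut G -> (a y \in G) = (y \in G).
Proof.
move=> Aa; case Gy: (y \in G).
  by rewrite -(autmE Aa) -{2}(im_autm Aa) mem_morphim.
by rewrite (out_Aut Aa) ?Gy.
Qed.

Lemma scal_valid a M M0 : valid (a, M) -> valid (a, M0) ->
  exists l : F, (l ^+ n = 1)%R /\ M = (l *: M0)%R.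
Proof.
move=> vM vM0; have uM0 := valid_unit vM0.
case/validP: vM => /= Aa dM HM; case/validP: vM0 => /= _ dM0 HM0.
pose C := M *m invmx M0.
have cC : centgmx rho C.
  apply/centgmxP => y Gy.
  have Gz : (a^-1)%g y \in G by rewrite Aut_mem ?groupV.
  have ey : a ((a^-1)%g y) = y by rewrite permKV.
  have h1 := HM _ Gz; have h0 := HM0 _ Gz; rewrite ey in h1 h0.
  have h2 : invmx M0 *m rho y = rho ((a^-1)%g y) *m invmx M0.
    by rewrite -[rho y](mulmxK uM0) h0 mulmxA mulKmx.
  by rewrite /C -mulmxA h2 mulmxA -h1 mulmxA.
have absG : mx_absolutely_irreducible rho by apply: group_closure_closed_field.
have /is_scalar_mxP [l eC] := mx_abs_irr_cent_scalar absG cC.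
have eM : M = (l *: M0)%R by rewrite -mul_scalar_mx -eC /C mulmxKV.
exists l; split => //.
by move: dM; rewrite eM detZ dM0 mulr1.
Qed.

Lemma roots_fin : exists rs : seq F, forall l : F, l ^+ n = 1 -> l \in rs.
Proof.
have [rs ers] := closed_field_poly_normal ('X^n - 1%:P : {poly F}).
exists rs => l ln.
move: ers; rewrite lead_coefXnsubC ?n_gt0 // scale1r => ers.
by rewrite -root_prod_XsubC -ers rootE !hornerE ln subrr.
Qed.

Lemma valid_fin : exists s : seq PT, forall x, valid x -> x \in s.
Proof.
have [rs Hrs] := roots_fin.
suff: forall L : seq {perm gT}, exists s : seq PT,
   forall x, valid x -> x.1 \in L -> x \in s.
  case/(_ (enum {perm gT})) => s Hs; exists s => x vx; apply: Hs; by rewrite ?mem_enum.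
elim => [|a L [s Hs]]; first by exists [::].
case: (classic (exists M, valid (a, M))) => [[M0 vM0] | nM].
  exists ([seq (a, l *: M0) | l <- rs] ++ s) => [[b M]] vx /=.
  rewrite inE mem_cat => /orP [/eqP eb | bL]; last by rewrite (Hs _ vx bL) orbT.
  subst b; have [l [ln ->]] := scal_valid vx vM0.
  by rewrite (map_f (fun l => (a, l *: M0))) ?Hrs.
exists s => [[b M]] vx /=; rewrite inE => /orP [/eqP eb | bL]; last exact: Hs.
by subst b; case: nM; exists M.
Qed.

Definition pone : PT := (1%g, 1%:M).
Definition pmul (x y : PT) : PT := ((x.1 * y.1)%g, y.2 *m x.2).
Definition pinv (x : PT) : PT := ((x.1^-1)%g, invmx x.2).

Lemma valid1 : valid pone.
Proof.
apply/validP; split => /=; rewrite ?group1 ?det1 // => y Gy.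
by rewrite perm1 mulmx1 mul1mx.
Qed.

Lemma validM x y : valid x -> valid y -> valid (pmul x y).
Proof.
case: x => a M; case: y => b N.
case/validP => /= Aa dM HM; case/validP => /= Ab dN HN.
apply/validP; split => /=; first by rewrite groupM.
  by rewrite det_mulmx dM dN mulr1.
move=> y Gy; rewrite permM mulmxA HN ?Aut_mem // -!mulmxA HM //.
Qed.

Lemma validV x : valid x -> valid (pinv x).
Proof.
move=> vx; have uM := valid_unit vx; move: vx.
case: x uM => a M /= uM; case/validP => /= Aa dM HM.
apply/validP; split => /=; first by rewrite groupV.
  by rewrite det_inv dM invr1.
move=> y Gy; have Gz : (a^-1)%g y \in G by rewrite Aut_mem ?groupV.
have := HM _ Gz; rewrite permKV => h0.
by rewrite -[rho y](mulmxK uM) h0 mulmxA mulKmx.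
Qed.

Lemma pmulA x y z : pmul x (pmul y z) = pmul (pmul x y) z.
Proof. by rewrite /pmul /= mulgA mulmxA. Qed.

Lemma pmul1 x : pmul pone x = x.
Proof. by case: x => a M; rewrite /pmul /= mul1g mulmx1. Qed.

Lemma pmulV x : valid x -> pmul (pinv x) x = pone.
Proof. by move=> vx; rewrite /pmul /= mulVg mulmxV ?valid_unit. Qed.

Variable s : seq PT.
Hypothesis Hs : forall x, (x \in s) = valid x.

Definition Dat : gdata.
refine (@GData (PT : choiceType) s pone pmul pinv _ _ _ _ _ _).
- by rewrite Hs valid1.
- by move=> x y; rewrite !Hs; apply: validM.
- by move=> x; rewrite !Hs; apply: validV.
- by move=> *; apply: pmulA.
- by move=> *; apply: pmul1.
- by move=> x; rewrite Hs; apply: pmulV.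
Defined.


Hypothesis Hperf : (G^`(1))%g = G.
Local Notation aT := (gcar Dat).

Lemma det_rho1 g : g \in G -> \det (rho g) = 1.
Proof.
pose H := [set x in G | \det (rho x) == 1].
have gH : group_set H.
  apply/group_setP; split; first by rewrite inE group1 repr_mx1 det1 eqxx.
  move=> x y; rewrite !inE => /andP [Gx /eqP dx] /andP [Gy /eqP dy].
  by rewrite groupM // repr_mxM // det_mulmx dx dy mulr1 eqxx.
have: G \subset Group gH.
  rewrite -{1}Hperf derg1 /commg gen_subG; apply/subsetP => _ /imset2P [x y Gx Gy ->].
  have ux : \det (rho x) != 0 by rewrite -unitfE -unitmxE repr_mx_unit.
  have uy : \det (rho y) != 0 by rewrite -unitfE -unitmxE repr_mx_unit.
  rewrite inE groupR //= commgEl repr_mxM ?groupV ?groupJ // det_mulmx repr_mxV //.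
  rewrite conjgE !repr_mxM ?groupV ?groupM // !det_mulmx !repr_mxV // !det_inv.
  by apply/eqP; rewrite mulrCA mulKf // mulVf.
by move/subsetP => sGH Gg; have := sGH g Gg; rewrite inE => /andP [_ /eqP].
Qed.

Definition phiP (g : gT) : PT := (conj_aut G g, rho (g^-1)%g).

Lemma valid_phi g : g \in G -> valid (phiP g).
Proof.
move=> Gg; apply/validP; split => /=.
- by apply: (subsetP (Aut_conj_aut G G)); apply: mem_morphim => //; apply: (subsetP (normG G)).
- by rewrite det_rho1 ?groupV.
move=> y Gy; rewrite conj_autE // conjgE -!repr_mxM ?groupM ?groupV //.
by rewrite -mulgA mulgK.
Qed.

Definition phi0 (g : gT) : aT := insubd (1%g : aT) (phiP g).

Lemma phi0E g : g \in G -> ssval (phi0 g) = phiP g.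
Proof. by move=> Gg; rewrite /phi0 insubdK // Hs valid_phi. Qed.

Lemma phi0M : {in G &, {morph phi0 : x y / (x * y)%g}}.
Proof.
move=> x y Gx Gy; apply: val_inj; change (ssval (phi0 (x * y)%g) = ssval (phi0 x * phi0 y)%g).
rewrite gcM !phi0E ?groupM //.
rewrite /phiP /pmul /= conj_aut_morphM ?(subsetP (normG G)) //.
by rewrite invMg repr_mxM ?groupV.
Qed.

Canonical phim := Morphism phi0M.

Lemma phi0_eq1 g : g \in G -> (phi0 g = 1%g) <-> (g \in 'C(G) /\ rho g = 1%:M).
Proof.
move=> Gg; have nGg : g \in 'N(G) by apply: (subsetP (normG G)).
have e1 : (conj_aut G g = 1%g) <-> g \in 'C(G).
  rewrite -ker_conj_aut; split => [h | ]; first by apply/kerP.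
  by move/kerP; apply.
have e2 : rho (g^-1)%g = 1%:M <-> rho g = 1%:M.
  rewrite repr_mxV //; split => [h|->]; last exact: invmx1.
  by rewrite -[rho g]invmxK h invmx1.
split => [h | [h1 h2]].
  have : ssval (phi0 g) = ssval (1%g : aT) by rewrite h.
  rewrite phi0E // gc1 /phiP /pone => -[/e1 ? /e2 ?]; done.
apply: val_inj; change (ssval (phi0 g) = ssval (1%g : aT)).
rewrite phi0E // gc1 /phiP /pone; congr (_, _); [exact/e1 | exact/e2].
Qed.

Lemma ker_phim : 'ker phim = 'Z(G) :&: rker rho.
Proof.
apply/setP => g; apply/idP/idP => [Kg | ].
  have Gg := dom_ker Kg; have /(phi0_eq1 Gg) [cg rg] := mker Kg.
  rewrite inE; apply/andP; split; first by rewrite /center inE Gg cg.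
  by apply/rkerP.
rewrite inE => /andP [Zg /rkerP [Gg rg]]; apply/kerP => //; apply/phi0_eq1 => //.
by move: Zg; rewrite /center inE => /andP [_ ?].
Qed.

Lemma conj_aut_Aut g : g \in G -> conj_aut G g \in Aut G.
Proof. by move=> Gg; case/validP: (valid_phi Gg). Qed.

Lemma gc_valid (x : aT) : valid (ssval x).
Proof. by rewrite -Hs; apply: ssvalP. Qed.

Definition h0 (x : aT) : {perm gT} := (ssval x).1.
Lemma h0M : {in [set: aT] &, {morph h0 : x y / (x * y)%g}}.
Proof. by move=> x y _ _; rewrite /h0 gcM. Qed.
Canonical hm := Morphism h0M.

Lemma phi0J (x : aT) g : g \in G -> phi0 (h0 x g) = ((phi0 g) ^ x)%g.
Proof.
move=> Gg; have vx := gc_valid x; have uM := valid_unit vx.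
rewrite /h0; case ex: (ssval x) vx uM => [a M] vx uM.
case/validP: (vx) => /= Aa _ HM.
have Gag : a g \in G by rewrite Aut_mem.
apply: val_inj; change (ssval (phi0 (a g)) = ssval ((phi0 g) ^ x)%g).
rewrite conjgE !gcM gcV phi0E // phi0E // ex /phiP /pmul /pinv /=; congr (_, _).
  apply/permP => y; rewrite !permM.
  case Gy: (y \in G).
    have Gz : (a^-1)%g y \in G by rewrite Aut_mem ?groupV.
    rewrite /= conj_autE //.
    have aJ : a (((a^-1)%g y) ^ g)%g = ((a ((a^-1)%g y)) ^ (a g))%g by rewrite -(autmE Aa) morphJ.
    by rewrite [conj_aut G g _]conj_autE // aJ permKV.
  have nGz : (a^-1)%g y \notin G by rewrite Aut_mem ?groupV ?Gy.
  rewrite (out_Aut (conj_aut_Aut Gg) nGz) (out_Aut (groupVr Aa) (negbT Gy)).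
  rewrite (out_Aut Aa (negbT Gy)) (out_Aut (conj_aut_Aut Gag) (negbT Gy)) //.
have aV : a (g^-1)%g = ((a g)^-1)%g by rewrite -(autmE Aa) morphV.
rewrite -aV.
by rewrite -[rho (a _)](mulmxK uM) HM ?groupV.
Qed.

Lemma gc_of (x : PT) : valid x -> exists y : aT, ssval y = x.
Proof. by move=> vx; exists (insubd (1%g : aT) x); rewrite insubdK // Hs. Qed.

Lemma im_hm a : a \in hm @* [set: aT] <-> in_Aut_stab rho a.
Proof.
split.
  case/morphimP => x _ _ ->; have vx := gc_valid x; have uM := valid_unit vx.
  case/validP: vx => Aa _ HM; rewrite /in_Aut_stab; split; [exact: Aa | by exists (ssval x).2].
case=> Aa [B uB HB].
have [l rl] : exists l : F, root ('X^n - ((\det B)^-1)%:P) l.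
  apply/closed_rootP; rewrite size_XnsubC ?n_gt0 //; change (n != 0%N); by rewrite -lt0n n_gt0.
have ln : l ^+ n = (\det B)^-1 by move: rl; rewrite rootE !hornerE subr_eq0 => /eqP.
have vx : valid (a, l *: B).
  apply/validP; split => //=.
    rewrite detZ ln mulVf //; by rewrite -unitfE -unitmxE.
  by move=> y Gy; rewrite -scalemxAr HB // scalemxAl.
have [x ex] := gc_of vx.
have -> : a = h0 x by rewrite /h0 ex.
by apply: mem_morphim; rewrite inE.
Qed.

Lemma fix_perfect (a : {perm gT}) : a \in Aut G ->
  (forall g, g \in G -> (a g * (g^-1))%g \in 'C(G)) -> a = 1%g.
Proof.
move=> Aa Hc.
pose H := [set g in G | a g == g].
have gH : group_set H.
  apply/group_setP; split; first by rewrite inE group1 -(autmE Aa) morph1 eqxx.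
  move=> x y; rewrite !inE => /andP [Gx /eqP ax] /andP [Gy /eqP ay].
  by rewrite groupM // -(autmE Aa) morphM //= autmE ax ay eqxx.
have comm1 c z : c \in 'C(G) -> z \in G -> [~ c, z]%g = 1%g.
  by move=> /centP cc Gz; apply/eqP/commgP; apply: cc.
have comm1' c z : c \in 'C(G) -> z \in G -> [~ z, c]%g = 1%g.
  by move=> /centP cc Gz; apply/eqP/commgP; apply: commute_sym; apply: cc.
have sGH : G \subset Group gH.
  rewrite -{1}Hperf derg1 /commg gen_subG; apply/subsetP => _ /imset2P [x y Gx Gy ->].
  rewrite inE groupR //=; apply/eqP.
  have -> : a [~ x, y]%g = [~ a x, a y]%g by rewrite -(autmE Aa) morphR.
  rewrite -(mulgVK x (a x)) -(mulgVK y (a y)).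
  rewrite commMgJ comm1 ?Hc ?groupM ?groupV ?Aut_mem // conj1g mul1g.
  by rewrite commgMJ (comm1' (a y * y^-1)%g x) ?Hc // conj1g mulg1.
apply/permP => y; rewrite perm1; case Gy: (y \in G).
  by have := subsetP sGH y Gy; rewrite inE => /andP [_ /eqP].
by rewrite (out_Aut Aa) ?Gy.
Qed.

Lemma ker_hm : 'ker hm = 'C_[set: aT](phim @* G).
Proof.
apply/setP => x; rewrite [x \in 'C__(_)]in_setI in_setT /=; apply/idP/idP => [Kx | Cx].
  have hx : h0 x = 1%g by have := mker Kx.
  have vx := gc_valid x; case/validP: vx => _ _ HM.
  apply/centP => _ /morphimP [g _ Gg ->].
  apply: val_inj; change (ssval (x * phi0 g)%g = ssval (phi0 g * x)%g).
  rewrite !gcM phi0E //; rewrite /h0 in hx.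
  case: (ssval x) hx HM => a M /= -> HM; rewrite /pmul /= mulg1 mul1g; congr (_, _).
  by have := HM _ (groupVr Gg); rewrite perm1 => ->.
apply/kerP; first by rewrite inE.
have vx := gc_valid x; case/validP: vx => Aa _ _.
apply: fix_perfect => // g Gg.
have Gag : h0 x g \in G by rewrite Aut_mem.
have e : phi0 (h0 x g) = phi0 g.
  rewrite phi0J //; apply/conjg_fixP/commgP; apply: commute_sym.
  by move/centP: Cx; apply; apply: mem_morphim.
have : phi0 (h0 x g * g^-1)%g = 1%g by rewrite morphM ?groupV //= e -morphM ?groupV // mulgV morph1.
by case/(phi0_eq1 (groupM Gag (groupVr Gg))).
Qed.

Lemma scal_of_ker x : x \in 'ker hm -> exists l : F, ssval x = (1%g, l%:M).
Proof.
move=> Kx; have hx : h0 x = 1%g by have := mker Kx.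
have vx := gc_valid x; rewrite /h0 in hx.
case ex : (ssval x) vx hx => [a M] vx /= ha; subst a.
case/validP: vx => /= _ _ HM.
have cM : centgmx rho M.
  by apply/centgmxP => y Gy; have := HM _ Gy; rewrite perm1 => ->.
have absG : mx_absolutely_irreducible rho by apply: group_closure_closed_field.
have /is_scalar_mxP [l ->] := mx_abs_irr_cent_scalar absG cM.
by exists l.
Qed.

Lemma cent_Z : 'C_[set: aT](phim @* G) = 'Z([set: aT]).
Proof.
apply/eqP; rewrite eqEsubset; apply/andP; split; last first.
  by rewrite /center setIS // centS // subsetT.
apply/subsetP => x Cx; rewrite -ker_hm in Cx.
have [l ex] := scal_of_ker Cx.
rewrite /center inE in_setT /=; apply/centP => y _.
apply: val_inj; change (ssval (x * y)%g = ssval (y * x)%g).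
rewrite !gcM /= ex /pmul /= mulg1 mul1g; congr (_, _).
by rewrite scalar_mxC.
Qed.

Lemma Z_pprime p : prime p -> p \in [pchar F] -> ~~ (p %| #|'Z([set: aT])|)%N.
Proof.
move=> pp pF; apply/negP => pd; have [x Zx ox] := Cauchy pp pd.
have Kx : x \in 'ker hm by rewrite ker_hm cent_Z.
have [l ex] := scal_of_ker Kx.
have eX k : ssval (x ^+ k)%g = (1%g, (l ^+ k)%:M).
  elim: k => [|k IH]; first by rewrite expg0 gc1 expr0.
  by rewrite expgS gcM /= ex IH /pmul /= mulg1 exprSr scalar_mxM.
have : ssval (x ^+ p)%g = ssval (1%g : aT) by rewrite -ox expg_order.
rewrite eX gc1 => -[e].
have lp : l ^+ p = 1.
  have := congr1 (fun M : 'M[F]_n => M (Ordinal n_gt0) (Ordinal n_gt0)) e.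
  by rewrite /= !mxE eqxx /= !mulr1n.
have l1 : l = 1.
  have := pFrobenius_autB_comm pF (commr1 l).
  rewrite !pFrobenius_autE lp expr1n subrr => /eqP.
  by rewrite expf_eq0 subr_eq0 => /andP [_ /eqP].
have x1 : x = 1%g by apply: val_inj; change (ssval x = ssval (1%g : aT)); rewrite ex gc1 l1.
by move: ox; rewrite x1 order1 => p1; move: pp; rewrite -p1.
Qed.

Lemma N_normal : (phim @* G)%G <| [set: aT]%G.
Proof.
apply/andP; split; first exact: subsetT.
apply/subsetP => x _; apply/normP.
have sub : forall y : aT, (phim @* G) :^ y \subset phim @* G.
  move=> y; apply/subsetP => z; rewrite mem_conjg => /morphimP [g _ Gg e].
  have -> : z = ((phi0 g) ^ y)%g by rewrite -e conjgKV.
  have Gy' : h0 y g \in G by case/validP: (gc_valid y) => Aa _ _; rewrite /h0 Aut_mem.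
  by rewrite -phi0J //; apply: mem_morphim.
by apply/eqP; rewrite eqEcard sub cardJg leqnn.
Qed.

Lemma invmxM' (B A : 'M[F]_n) : B \in unitmx -> A \in unitmx ->
  invmx (B *m A) = invmx A *m invmx B.
Proof.
move=> uB uA; have uBA : B *m A \in unitmx by rewrite unitmx_mul uB.
have e : B *m A *m (invmx A *m invmx B) = 1%:M.
  by rewrite -mulmxA (mulmxA A) mulmxV // mul1mx mulmxV.
by rewrite -[LHS]mulmx1 -e mulKmx.
Qed.

Definition sig0 (x : aT) : 'M[F]_n := invmx (ssval x).2.
Lemma sig_repr : mx_repr [set: aT] sig0.
Proof.
split; first by rewrite /sig0 gc1 invmx1.
move=> x y _ _; rewrite /sig0 gcM /= invmxM' ?valid_unit ?gc_valid //.
Qed.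
Definition sigma := MxRepresentation sig_repr.

Lemma sigma_phi g : g \in G -> sigma (phi0 g) = rho g.
Proof. by move=> Gg; rewrite /= /sig0 phi0E // /phiP /= repr_mxV // invmxK. Qed.
End Main.

Local Close Scope ring_scope.

Lemma perfect_cover (p : nat) (sT gT : finGroupType) (S : {group sT}) (G : {group gT}) :
  universal_pprime_cover p S G -> (G^`(1))%g = G.
Proof.
case=> yT [Y [P [[[perfY _] _] PS iso]]].
have sPZ : P \subset 'Z(Y) by move: PS; rewrite inE => /pHall_sub.
have nPY : Y \subset 'N(P).
  apply: cents_norm; rewrite centsC; apply: subset_trans sPZ _; exact: subsetIr.
have /isogP [f injf fim] : (Y / P)%g \isog G by rewrite isog_sym.
by rewrite -fim -morphim_der // -quotient_der // perfY.
Qed.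

Theorem lemma3p4 (p : nat) (sT gT : finGroupType) (S : {group sT}) (G : {group gT})
  (F : closedFieldType) (n : nat) (rho : mx_representation F G n) :
  prime p -> simple S -> ~~ abelian S -> universal_pprime_cover p S G ->
  (p \in [pchar F])%R -> mx_irreducible rho ->
  exists (aT : finGroupType) (A N : {group aT})
    (f : {morphism (G / ('Z(G) :&: rker rho))%g >-> aT})
    (h : {morphism A >-> {perm gT}}),
    ((N <| A)%g /\ isom (G / ('Z(G) :&: rker rho))%g N f /\
     (forall a : {perm gT}, a \in (h @* A)%g <-> in_Aut_stab rho a) /\
     'ker h = 'C_A(N)%g /\
     (forall a g, a \in A -> g \in G ->
        f (coset ('Z(G) :&: rker rho) (h a g)) = (f (coset ('Z(G) :&: rker rho) g) ^ a)%g) /\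
     'C_A(N)%g = 'Z(A)%g /\ ~~ (p %| #|'Z(A)|)) /\
    (exists sigma : mx_representation F A n,
       forall g, g \in G -> sigma (f (coset ('Z(G) :&: rker rho) g)) = rho g).
Proof.
move=> pp _ _ cov pF irr.
have Hperf := perfect_cover cov.
have [s0 Hs0] := valid_fin irr.
pose s := filter (valid rho) s0.
have Hs : forall x, (x \in s) = valid rho x.
  by move=> x; rewrite mem_filter; case vx: (valid rho x) => //=; apply: Hs0.
pose Z0 := ('Z(G) :&: rker rho)%G.
have sZ0 : Z0 \subset 'Z(G) by exact: subsetIl.
have nZ0 : G \subset 'N(Z0).
  apply: cents_norm; rewrite centsC; apply: subset_trans sZ0 _; exact: subsetIr.
have sK : 'ker (coset_morphism Z0) \subset 'ker (phim Hs Hperf).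
  by rewrite ker_coset ker_phim.
pose f : {morphism (G / ('Z(G) :&: rker rho))%g >-> gcar (Dat Hs)} := factm sK nZ0.
have fE : forall g, g \in G -> f (coset ('Z(G) :&: rker rho) g) = phi0 Hs g.
  by move=> g Gg; apply: factmE.
exists (gcar (Dat Hs)), [set: gcar (Dat Hs)]%G, (phim Hs Hperf @* G)%G, f, (hm Hs).
split; last first.
  by exists (sigma Hs) => g Gg; rewrite fE // sigma_phi.
split; first exact: N_normal.
split.
  apply/isomP; split.
    by apply/injm_factmP; rewrite ker_coset ker_phim.
  exact: morphim_factm.
split; first exact: im_hm.
split; first exact: ker_hm.
split.
  move=> a g _ Gg; have Gag : h0 a g \in G.
    by case/validP: (gc_valid a) => Aa _ _; rewrite /h0 Aut_mem.
  by rewrite !fE // phi0J.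
split; first exact: cent_Z.
exact: Z_pprime.
Qed.
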